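(* Consider an execution of the Adaptive Algorithm. Suppose that at some point an unmatched position $p_j$ and an applicant $a_i$ interview each other and the revealed values satisfy $\epsilon^A_{ij}\ge 0$ and $\epsilon^P_{ji}\ge 0$. Then the algorithm (tentatively) matches $a_i$ and $p_j$ to each other in the next iteration, and afterwards $p_j$ interviews only applicants $a_{i'}$ with $i'<\max(i,j+1)$.
   Context: Model. Let $A=\{a_1,\dots,a_n\}$ be a set of applicants and $P=\{p_1,\dots,p_n\}$ a set of positions. Each applicant $a_i$ has a publicly known value $u_i\in\mathbb R$ and each position $p_j$ a publicly known value $v_j\in\mathbb R$, indexed so that $u_1\ge u_2\ge\dots\ge u_n$ and $v_1\ge v_2\ge\dots\ge v_n$. The random variables $\epsilon^A_{ij}$, $\epsilon^P_{ji}$ ($i,j\in[n]$) are mutually independent and identically distributed according to a known distribution symmetric about $0$ (mean zero). The utility of $a_i$ for $p_j$ is $v_j+\epsilon^A_{ij}$ and the utility of $p_j$ for $a_i$ is $u_i+\epsilon^P_{ji}$; the values $\epsilon^A_{ij},\epsilon^P_{ji}$ become known only when $a_i$ and $p_j$ interview each other. The observed utility $v^o_{ij}$ of $a_i$ for $p_j$ equals $v_j+\epsilon^A_{ij}$ if $a_i,p_j$ have interviewed and $v_j$ otherwise; $u^o_{ji}$ is defined symmetrically ($u_i+\epsilon^P_{ji}$ or $u_i$). Write $p_j\succ_{a_i}p_{j'}$ iff $v^o_{ij}>v^o_{ij'}$ and $a_i\succ_{p_j}a_{i'}$ iff $u^o_{ji}>u^o_{ji'}$ (ties broken in favor of the smaller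 index); every agent prefers any partner to being unmatched. For a matching $\mu$, $\mu(x)$ denotes the partner of $x$ ($\emptyset$ if unmatched). Adaptive Algorithm. Initially all agents are unmatched and $v^o_{ij}=v_j$, $u^o_{ji}=u_i$ for all $i,j$. For an unmatched applicant $a$, let $\beta(a)$ be $a$'s most preferred position (w.r.t. current observed utilities) that has not yet rejected $a$. While some applicant is unmatched: let $j^*$ be the smallest index such that $\beta(a_i)=p_{j^*}$ for some unmatched $a_i$; let $a_{i^*}$ be $p_{j^*}$'s favorite applicant among $\{a_i:\beta(a_i)=p_{j^*},\mu(a_i)=\emptyset\}$. If $a_{i^*},p_{j^*}$ have not interviewed and ($i^*\le j^*$ or $a_{i^*}\succ_{p_{j^*}}\mu(p_{j^*})$), then they interview and $v^o_{i^*j^*},u^o_{j^*i^*}$ are updated. Otherwise: if $\mu(p_{j^*})\succ_{p_{j^*}}a_{i^*}$, then $p_{j^*}$ rejects $a_{i^*}$; else $p_{j^*}$ rejects $\mu(p_{j^*})$ (if nonempty) and $a_{i^*},p_{j^*}$ become matched. When all applicants are matched, output $\mu$. *)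

(* Defs.v *)
(* Formalization of the Adaptive Algorithm (deterministic,
   for a fixed realization of the noise terms). Indices are 0-based:
   applicant a_{i+1} is (i : 'I_n), position p_{j+1} is (j : 'I_n). *)
From mathcomp Require Import all_boot all_order all_algebra.
Set Implicit Arguments. Unset Strict Implicit. Unset Printing Implicit Defensive.
Import Order.TTheory GRing.Theory Num.Theory.
Local Open Scope ring_scope.

Section Adaptive.
Variable R : realDomainType.
Variable n : nat.
(* u i = value of applicant i, v j = value of position j,
   eA i j = eps^A_{ij},  eP j i = eps^P_{ji} (revealed realizations). *)
Variables (u v : 'I_n -> R) (eA eP : 'I_n -> 'I_n -> R).

(* State of the algorithm:
   mu  : current position of each applicant (None = unmatched);
   intv: set of pairs (i,j) such that a_i and p_j have interviewed;
   rej : set of pairs (i,j) such that p_j has rejected a_i. *)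
Record state := State {
  mu : {ffun 'I_n -> option 'I_n};
  intv : {set 'I_n * 'I_n};
  rej : {set 'I_n * 'I_n} }.

Definition init : state := State [ffun _ => None] set0 set0.

Definition vo (s : state) (i j : 'I_n) : R :=
  if (i, j) \in intv s then v j + eA i j else v j.
Definition uo (s : state) (j i : 'I_n) : R :=
  if (i, j) \in intv s then u i + eP j i else u i.

Definition prefP (s : state) (i j j' : 'I_n) : bool :=
  (vo s i j' < vo s i j) || ((vo s i j == vo s i j') && (nat_of_ord j < nat_of_ord j')%N).
Definition prefA (s : state) (j i i' : 'I_n) : bool :=
  (uo s j i' < uo s j i) || ((uo s j i == uo s j i') && (nat_of_ord i < nat_of_ord i')%N).

Definition partner (s : state) (j : 'I_n) : option 'I_n := [pick i | mu s i == Some j].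

Definition prefA_opt (s : state) (j i : 'I_n) (o : option 'I_n) : bool :=
  if o is Some i' then prefA s j i i' else true.
Definition prefO (s : state) (j : 'I_n) (o : option 'I_n) (i : 'I_n) : bool :=
  if o is Some i' then prefA s j i' i else false.

Definition beta (s : state) (i : 'I_n) : option 'I_n :=
  [pick j | ((i, j) \notin rej s) &&
     [forall j', (((i, j') \notin rej s) && (j' != j)) ==> prefP s i j j']].

Definition cand (s : state) (j i : 'I_n) : bool :=
  (mu s i == None) && (beta s i == Some j).
Definition target (s : state) (j : 'I_n) : bool := [exists i, cand s j i].

Definition jstar (s : state) : option 'I_n :=
  [pick j | target s j && [forall j', target s j' ==> (nat_of_ord j <= nat_of_ord j')%N]].
Definition istar (s : state) (j : 'I_n) : option 'I_n :=
  [pick i | cand s j i && [forall i', (cand s j i' && (i' != i)) ==> prefA s j i i']].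

Inductive action := Interview of 'I_n & 'I_n | Reject of 'I_n & 'I_n | Match of 'I_n & 'I_n.

(* the action performed in the current iteration (None = algorithm stopped) *)
Definition next_action (s : state) : option action :=
  if [forall i, mu s i != None] then None else
  match jstar s with
  | None => None
  | Some j =>
    match istar s j with
    | None => None
    | Some i =>
      if ((i, j) \notin intv s) &&
         ((nat_of_ord i <= nat_of_ord j)%N || prefA_opt s j i (partner s j))
      then Some (Interview i j)
      else if prefO s j (partner s j) i then Some (Reject j i)
      else Some (Match i j)
    end
  end.

Definition apply_action (s : state) (a : action) : state :=
  match a with
  | Interview i j => State (mu s) ((i, j) |: intv s) (rej s)
  | Reject j i => State (mu s) (intv s) ((i, j) |: rej s)
  | Match i j =>
    match partner s j with
    | None => State [ffun k => if k == i then Some j else mu s k] (intv s) (rej s)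
    | Some i0 => State [ffun k => if k == i then Some j
                                  else if k == i0 then None else mu s k]
                       (intv s) ((i0, j) |: rej s)
    end
  end.

Fixpoint traj (k : nat) : state :=
  match k with
  | 0 => init
  | k'.+1 => let s := traj k' in
             if next_action s is Some a then apply_action s a else s
  end.

End Adaptive.

(* Main.v *)
Require Import Defs.
From mathcomp Require Import all_boot all_order all_algebra.
Import Order.TTheory GRing.Theory Num.Theory.
Local Open Scope ring_scope.

Definition lx {R : realDomainType} (x y : R) (a b : nat) : bool :=
  (y < x) || ((x == y) && (a < b)%N).

Lemma lx_asym {R : realDomainType} {x y : R} {a b} : lx x y a b -> lx y x b a -> False.
Proof.
rewrite /lx; case: (ltgtP x y) => //= e.
move=> h1 h2; have := ltn_trans h1 h2; by rewrite ltnn.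
Qed.

Lemma lx_total (R : realDomainType) (x y : R) a b : a <> b -> lx x y a b || lx y x b a.
Proof.
move=> ab; rewrite /lx; case: (ltgtP x y) => //= _.
by case: (ltngtP a b) => // eab; case: ab.
Qed.

Lemma lx_trans {R : realDomainType} {x y z : R} {a b c} :
  lx x y a b -> lx y z b c -> lx x z a c.
Proof.
rewrite /lx => /orP[h1|/andP[/eqP e1 h1]] /orP[h2|/andP[/eqP e2 h2]].
- by rewrite (lt_trans h2 h1).
- by rewrite -e2 h1.
- by rewrite e1 h2.
- by rewrite e1 e2 eqxx (ltn_trans h1 h2) orbT.
Qed.

Lemma lx_mono (R : realDomainType) (x x' y : R) a b : x <= x' -> lx x y a b -> lx x' y a b.
Proof.
rewrite /lx le_eqVlt => /orP[/eqP <-//|hx] /orP[h|/andP[/eqP e h]].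
- by rewrite (lt_trans h hx).
- by rewrite -e hx.
Qed.

Lemma pick_uniq (T : finType) (P : pred T) a :
  (forall x y, P x -> P y -> x = y) -> P a -> [pick x | P x] = Some a.
Proof.
move=> U Pa; case: pickP => [x Px|none]; first by rewrite (U _ _ Px Pa).
by have := none a; rewrite Pa.
Qed.

Lemma pick_some {T : finType} {P : pred T} {a} : [pick x | P x] = Some a -> P a.
Proof. by case: pickP => [x Px [<-]|]. Qed.
Lemma na_spec {R : realDomainType} {n : nat} {u v : 'I_n -> R}
  {eA eP : 'I_n -> 'I_n -> R} {s : state n} {act} :
  next_action u v eA eP s = Some act ->
  exists a b, jstar v eA s = Some b /\ istar u v eA eP s b = Some a /\
   ((act = Interview a b /\ (((a,b) \notin intv s) &&
         ((nat_of_ord a <= nat_of_ord b)%N || prefA_opt u eP s b a (partner s b)))) \/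
    (act = Reject b a /\ ~~ (((a,b) \notin intv s) &&
         ((nat_of_ord a <= nat_of_ord b)%N || prefA_opt u eP s b a (partner s b)))
      /\ prefO u eP s b (partner s b) a) \/
    (act = Match a b /\ ~~ (((a,b) \notin intv s) &&
         ((nat_of_ord a <= nat_of_ord b)%N || prefA_opt u eP s b a (partner s b)))
      /\ ~~ prefO u eP s b (partner s b) a)).
Proof.
rewrite /next_action; case: ifP => // _.
case hj: jstar => [b|] //; case hi: istar => [a|] //.
exists a, b; split=> //; split=> //.
move: H.
case: ifP => hc; first by move=> [<-]; left.
by move/negbT: hc => hc; case: ifP => hp [<-]; right; [left|right]; split=> //; rewrite hp.
Qed.

Lemma prefP_lx (R : realDomainType) (n : nat) (v : 'I_n -> R)
  (eA : 'I_n -> 'I_n -> R) s i j j' :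
  prefP v eA s i j j' = lx (vo v eA s i j) (vo v eA s i j') j j'.
Proof. by []. Qed.
Lemma prefA_lx (R : realDomainType) (n : nat) (u : 'I_n -> R)
  (eP : 'I_n -> 'I_n -> R) s j i i' :
  prefA u eP s j i i' = lx (uo u eP s j i) (uo u eP s j i') i i'.
Proof. by []. Qed.

Lemma ord_neq (n : nat) (a b : 'I_n) : a <> b -> nat_of_ord a <> nat_of_ord b.
Proof. by move=> ab e; apply: ab; apply: val_inj. Qed.

Lemma step1 (R : realDomainType) (n : nat) (u v : 'I_n -> R)
  (eA eP : 'I_n -> 'I_n -> R) (s : state n) (i j : 'I_n) :
  next_action u v eA eP s = Some (Interview i j) ->
  partner s j = None -> 0 <= eA i j -> 0 <= eP j i ->
  next_action u v eA eP (apply_action s (Interview i j)) = Some (Match i j).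
Proof.
move=> hn hp hA hP.
have hall : [forall x, mu s x != None] = false.
  by move: hn; rewrite /next_action; case: ifP.
have [a [b [hj [hi hc]]]] := na_spec hn.
case: hc => [[e hc]|[[e _]|[e _]]] //.
case: e => ea eb; subst a b.
move/andP: hc => [hij _].
set s1 := apply_action s (Interview i j).
have vo1 : forall x y, (x != i) || (y != j) -> vo v eA s1 x y = vo v eA s x y.
  move=> x y h; rewrite /vo /= in_setU1 xpair_eqE.
  by case: (x == i) h; case: (y == j).
have vo2 : vo v eA s i j <= vo v eA s1 i j.
  by rewrite /vo /= in_setU1 eqxx /= (negbTE hij) lerDl.
have uo1 : forall y x, (x != i) || (y != j) -> uo u eP s1 y x = uo u eP s y x.
  move=> y x h; rewrite /uo /= in_setU1 xpair_eqE.
  by case: (x == i) h; case: (y == j).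
have uo2 : uo u eP s j i <= uo u eP s1 j i.
  by rewrite /uo /= in_setU1 eqxx /= (negbTE hij) lerDl.
have ci : cand v eA s j i by have := pick_some hi; case/andP.
have hb : beta v eA s i = Some j by move: ci => /andP[_ /eqP].
have hbeta : forall x, beta v eA s1 x = beta v eA s x.
  move=> x; case: (eqVneq x i) => [->|xi].
    rewrite hb; apply: pick_uniq.
      move=> y z /andP[ry /forallP Hy] /andP[rz /forallP Hz].
      apply/eqP; apply/negPn/negP => yz.
      have := implyP (Hy z); rewrite rz eq_sym yz => /(_ isT).
      have := implyP (Hz y); rewrite ry yz => /(_ isT).
      rewrite !prefP_lx => h1 h2; exact: (lx_asym h2 h1).
    have := pick_some hb => /andP[rj /forallP Hj].
    rewrite /= rj /=; apply/forallP => j'; apply/implyP => hj'.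
    have := implyP (Hj j') hj'; rewrite !prefP_lx.
    case/andP: hj' => _ jj'.
    rewrite (vo1 i j'); last by rewrite jj' orbT.
    exact: lx_mono.
  rewrite /beta; apply: eq_pick => y /=; congr (_ && _).
  apply: eq_forallb => j' /=; by rewrite !prefP_lx !vo1 ?xi.
have hcand : forall y x, cand v eA s1 y x = cand v eA s y x.
  by move=> y x; rewrite /cand hbeta.
have htarget : forall y, target v eA s1 y = target v eA s y.
  by move=> y; rewrite /target; apply: eq_existsb => x; rewrite hcand.
have hj1 : jstar v eA s1 = Some j.
  rewrite -hj /jstar; apply: eq_pick => y /=; rewrite htarget; congr (_ && _).
  by apply: eq_forallb => z; rewrite htarget.
have hi1 : istar u v eA eP s1 j = Some i.
  apply: pick_uniq.
    move=> y z /andP[ry /forallP Hy] /andP[rz /forallP Hz].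
    apply/eqP; apply/negPn/negP => yz.
    have := implyP (Hy z); rewrite rz eq_sym yz => /(_ isT).
    have := implyP (Hz y); rewrite ry yz => /(_ isT).
    rewrite !prefA_lx => h1 h2; exact: (lx_asym h2 h1).
  have := pick_some hi => /andP[_ /forallP Hi].
  rewrite /= hcand ci /=; apply/forallP => i'; apply/implyP => hi'.
  rewrite hcand in hi'.
  have := implyP (Hi i') hi'; rewrite !prefA_lx.
  case/andP: hi' => _ ii'.
  rewrite (uo1 j i'); last by rewrite ii'.
  exact: lx_mono.
rewrite /next_action /= hall hj1 hi1 in_setU1 eqxx /=.
by have -> : partner s1 j = partner s j by []; rewrite hp.
Qed.

Definition Inv {R : realDomainType} {n : nat} (u : 'I_n -> R)
  (eP : 'I_n -> 'I_n -> R) (i j : 'I_n) (s : state n) : Prop :=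
  (i, j) \in intv s /\ (exists x, mu s x = Some j) /\
  forall x, mu s x = Some j -> (x, j) \in intv s /\
    (x = i \/ lx (u x + eP j x) (u i + eP j i) x i).

Lemma partner_some {n : nat} (s : state n) j :
  (exists x, mu s x = Some j) -> exists p, partner s j = Some p /\ mu s p = Some j.
Proof.
move=> [x hx]; rewrite /partner; case: pickP => [p /eqP hp|none].
  by exists p.
by have := none x; rewrite hx eqxx.
Qed.

Lemma inv_step (R : realDomainType) (n : nat) (u v : 'I_n -> R)
  (eA eP : 'I_n -> 'I_n -> R) (i j : 'I_n) (s : state n) :
  Inv u eP i j s ->
  Inv u eP i j (if next_action u v eA eP s is Some a then apply_action s a else s).
Proof.
move=> [hij [hne hI]].
case hn: next_action => [act|]; last by split.
have [a [b [hj [hi hc]]]] := na_spec hn.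
have ca : cand v eA s b a by have := pick_some hi; case/andP.
have mua : mu s a = None by move: ca => /andP[/eqP].
case: hc => [[-> _]|[[-> _]|[-> [hc hpo]]]].
- split; first by rewrite /= in_setU1 hij orbT.
  split=> // x hx; have [h1 h2] := hI x hx; split=> //.
  by rewrite /= in_setU1 h1 orbT.
- by split.
have [hab hpref] : (a, b) \in intv s /\
    forall p, partner s b = Some p -> prefA u eP s b a p.
  case hpb: (partner s b) hc hpo => [p|] /= hc hpo.
    have mup : mu s p = Some b.
      by move: hpb; rewrite /partner => /pick_some /eqP.
    have pa : a <> p by move=> e; rewrite e mup in mua.
    have := @lx_total _ (uo u eP s b a) (uo u eP s b p) _ _ (ord_neq _ _ _ pa).
    rewrite -!prefA_lx (negbTE hpo) orbF => hap.
    split; last by move=> q [<-].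
    by move: hc; rewrite hap orbT andbT negbK.
  by split=> //; move: hc; rewrite orbT andbT negbK.
case: (eqVneq b j) => [ebj|bj].
- subst b.
  have [p [hp mup]] := partner_some _ _ hne.
  have hap := hpref p hp.
  have pa : p != a by apply/eqP => e; rewrite e mua in mup.
  rewrite /apply_action hp; split => //; split.
    by exists a; rewrite /= ffunE eqxx.
  move=> x /=; rewrite ffunE.
  case: (eqVneq x a) => [-> _|xa].
    split=> //; right.
    have [_ hp'] := hI p mup.
    move: hap; rewrite prefA_lx /uo hab.
    have [pj _] := hI p mup; rewrite pj.
    case: hp' => [-> //|h1 h2]; exact: lx_trans h2 h1.
  case: (eqVneq x p) => // _ hx; exact: hI.
  rewrite /apply_action.
  case hpb: (partner s b) => [i0|].
    have mui0 : mu s i0 = Some b.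
      by move: hpb; rewrite /partner => /pick_some /eqP.
    split=> //; split.
      case: hne => x hx; exists x; rewrite /= ffunE.
      case: (eqVneq x a) => [e|_]; first by rewrite e mua in hx.
      case: (eqVneq x i0) => [e|_]; first by rewrite e mui0 in hx; case: hx => /eqP; rewrite (negbTE bj).
      exact: hx.
    move=> x /=; rewrite ffunE.
    case: (eqVneq x a) => [_ [/eqP]|_]; first by rewrite (negbTE bj).
    case: (eqVneq x i0) => // _; exact: hI.
  split=> //; split.
    case: hne => x hx; exists x; rewrite /= ffunE.
    case: (eqVneq x a) => [e|_]; first by rewrite e mua in hx.
    exact: hx.
  move=> x /=; rewrite ffunE.
  case: (eqVneq x a) => [_ [/eqP]|_]; first by rewrite (negbTE bj).
  exact: hI.
Qed.

Lemma trajS (R : realDomainType) (n : nat) (u v : 'I_n -> R)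
  (eA eP : 'I_n -> 'I_n -> R) k :
  traj u v eA eP k.+1 = (if next_action u v eA eP (traj u v eA eP k) is Some a
     then apply_action (traj u v eA eP k) a else traj u v eA eP k).
Proof. by []. Qed.

Theorem claim2p2 (R : realDomainType) (n : nat) (u v : 'I_n -> R)
  (eA eP : 'I_n -> 'I_n -> R)
  (hu : forall i i' : 'I_n, (nat_of_ord i <= nat_of_ord i')%N -> u i' <= u i)
  (hv : forall j j' : 'I_n, (nat_of_ord j <= nat_of_ord j')%N -> v j' <= v j)
  (k : nat) (i j : 'I_n) :
  next_action u v eA eP (traj u v eA eP k) = Some (Interview i j) ->
  partner (traj u v eA eP k) j = None ->
  0 <= eA i j -> 0 <= eP j i ->
  next_action u v eA eP (traj u v eA eP k.+1) = Some (Match i j) /\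
  (forall (k' : nat) (i' : 'I_n), (k < k')%N ->
     next_action u v eA eP (traj u v eA eP k') = Some (Interview i' j) ->
     (nat_of_ord i' < maxn (nat_of_ord i) (nat_of_ord j).+1)%N).
Proof.
move=> hn hp hA hP.
have h1 : next_action u v eA eP (traj u v eA eP k.+1) = Some (Match i j).
  by rewrite trajS hn; apply: step1.
split=> // k' i' hk hn'.
have hI2 : Inv u eP i j (traj u v eA eP k.+2).
  rewrite trajS h1 trajS hn /apply_action /=.
  have hpn : partner (State (mu (traj u v eA eP k))
        ((i, j) |: intv (traj u v eA eP k)) (rej (traj u v eA eP k))) j = None by [].
  rewrite hpn; split; first by rewrite /= in_setU1 eqxx.
  split; first by exists i; rewrite /= ffunE eqxx.
  move=> x /=; rewrite ffunE; case: (eqVneq x i) => [-> _|xi hx].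
    by rewrite in_setU1 eqxx; split=> //; left.
  by move: hp; rewrite /partner; case: pickP => // none; have := none x; rewrite hx eqxx.
have hIall : forall d, Inv u eP i j (traj u v eA eP (k.+2 + d)).
  elim=> [|d IH]; first by rewrite addn0.
  by rewrite addnS trajS; apply: inv_step.
case: (ltngtP k' k.+1) => [|hk2|ek]; first by rewrite ltnS leqNgt hk.
2: by move: hn'; rewrite ek h1.
have := hIall (k' - k.+2)%N; rewrite subnKC // => -[hij [hne hI]].
have [a [b [hj [hi hc]]]] := na_spec hn'.
case: hc => [[e hc]|[[e _]|[e _]]] //.
case: e => ea eb; subst a b.
case/andP: hc => hi'j hc.
case: (leqP (nat_of_ord i') (nat_of_ord j)) => [hle|hgt].
  by rewrite (leq_ltn_trans hle) // leq_max ltnSn orbT.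
have [p [hp' mup]] := partner_some _ _ hne.
move: hc; rewrite leqNgt hgt /= hp' /= prefA_lx /uo (negbTE hi'j).
have [pj hpi] := hI p mup; rewrite pj => hl.
have hl2 : lx (u i') (u i + eP j i) i' i.
  by case: hpi => [e|h]; [move: hl; rewrite e | exact: lx_trans hl h].
rewrite leq_max; apply/orP; left.
rewrite ltnNge; apply/negP => hii.
have h3 : u i' <= u i + eP j i by rewrite (le_trans (hu _ _ hii)) // lerDl.
move: hl2; rewrite /lx ltNge h3 /= => /andP[_].
by rewrite ltnNge hii.
Qed.
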